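(* Let $\Sigma\subseteq\widehat{\Sigma}$ be alphabets with $\Pi=\widehat{\Sigma}\setminus\Sigma$ finite, and let $R\subseteq\Sigma^*\times\Sigma^*$. If $D$ is a family of $\widehat{\Sigma}$-defining relations for $\Pi$ whose derived generator graph $\Gamma_D(D)$ is acyclic, then there exists a sequence of exactly $|\Pi|$ $\mathbf{Gen}(+)$ transformations between $\langle\Sigma\mid R\rangle$ and $\langle\widehat{\Sigma}\mid R\cup D\rangle$.
   Context: For an alphabet $\Sigma$, $\Sigma^*$ is the free monoid of words over $\Sigma$. For $R\subseteq\Sigma^*\times\Sigma^*$ (elements written $q\approx r$), the presentation $\langle\Sigma\mid R\rangle$ denotes the quotient of $\Sigma^*$ by the smallest congruence containing $R$. A $\mathbf{Gen}(+)$ transformation passes from a presentation $\langle\Sigma\mid R\rangle$ to $\langle\Sigma\cup\{x\}\mid R\cup\{x\approx w\}\rangle$ where $x\notin\Sigma$ is a new symbol and $w\in\Sigma^*$; a sequence of such transformations between two presentations is a chain of presentations starting at the first and ending at the second, each obtained from the previous one by one such transformation. A $\Sigma$-defining relation for $x\in\Sigma$ is a relation $x\approx w$ with $w\in\Sigma^*$; a family of $\Sigma$-defining relations for $\Pi\subseteq\Sigma$ is a set $\{r_x\mid x\in\Pi\}$ where each $r_x$ is a $\Sigma$-defining relation for $x$. The derived generator graph $\Gamma_D(D)$ of such a family $D$ is the directed graph with vertex set $\Pi$ and an edge $(x,y)$ whenever $y$ occurs in the right-hand side $w$ of the relation $x\approx w$ in $D$. A directed graph is acyclic if it has no directed path of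 positive length from a vertex to itself. *)

(* Defs.v *)
From mathcomp Require Import all_boot.
From Stdlib Require Import Relation_Operators.
Set Implicit Arguments. Unset Strict Implicit. Unset Printing Implicit Defensive.

Section Pres.
Variable A : eqType.

Definition word_over (S : A -> Prop) (w : seq A) : Prop :=
  forall a, a \in w -> S a.

Record presentation := Pres {
  p_alph : A -> Prop;
  p_rels : seq A * seq A -> Prop }.

Definition GenPlus (P Q : presentation) : Prop :=
  exists (x : A) (w : seq A),
    ~ p_alph P x /\ word_over (p_alph P) w /\
    p_alph Q = (fun a => p_alph P a \/ a = x) /\
    p_rels Q = (fun r => p_rels P r \/ r = ([:: x], w)).

Definition GenPlus_seq (n : nat) (P Q : presentation) : Prop :=
  exists f : nat -> presentation,
    f 0 = P /\ f n = Q /\ forall i, i < n -> GenPlus (f i) (f i.+1).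

Definition defining_family (Shat : A -> Prop) (Pi : seq A) (rhs : A -> seq A) : Prop :=
  forall x, x \in Pi -> word_over Shat (rhs x).

Definition family_rels (Pi : seq A) (rhs : A -> seq A) : seq A * seq A -> Prop :=
  fun r => exists2 x, x \in Pi & r = ([:: x], rhs x).

Definition dgg_edge (Pi : seq A) (rhs : A -> seq A) (x y : A) : Prop :=
  x \in Pi /\ y \in Pi /\ y \in rhs x.

Definition acyclic (E : A -> A -> Prop) : Prop :=
  forall x, ~ clos_trans A E x x.

End Pres.

(* Main.v *)
Require Import Defs.
From mathcomp Require Import all_boot.
From Stdlib Require Import Relation_Operators Classical FunctionalExtensionality PropExtensionality.
Set Implicit Arguments. Unset Strict Implicit.

Section S.
Variable A : eqType.
Variable Pi : seq A.
Variable rhs : A -> seq A.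
Hypothesis acyc : acyclic (dgg_edge Pi rhs).

Lemma sink (L : seq A) : L != [::] -> {subset L <= Pi} ->
  exists2 x, x \in L & forall a, a \in rhs x -> a \notin L.
Proof.
case: L => [//|d L'] _; set L := d :: L' => sub.
case: (boolP (has (fun x => ~~ has (mem (rhs x)) L) L)).
  case/hasP=> x xL /hasPn H; exists x => // a ar; apply/negP => aL.
  by have := H a aL; rewrite /= ar.
move/hasPn=> H.
pose s x := nth x [seq y <- L | y \in rhs x] 0.
have sP x : x \in L -> s x \in L /\ s x \in rhs x.
  move=> xL; have := H x xL; rewrite negbK has_filter => ne.
  have : s x \in [seq y <- L | y \in rhs x].
    by apply: mem_nth; case: [seq y <- L | y \in rhs x] ne.
  by rewrite mem_filter => /andP[-> ->].
have iL k : iter k s d \in L.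
  elim: k => [|k IH] /=; first by rewrite inE eqxx.
  by case: (sP _ IH).
have ct k y : y \in L -> clos_trans A (dgg_edge Pi rhs) y (iter k.+1 s y).
  elim: k y => [|k IH] y yL.
    apply: t_step; case: (sP _ yL) => h1 h2; split; [exact: sub|split; [exact: sub|exact: h2]].
  apply: (t_trans _ _ _ (s y)).
    apply: t_step; case: (sP _ yL) => h1 h2; split; [exact: sub|split; [exact: sub|exact: h2]].
  rewrite -addn1 iterD /=; exact: IH (proj1 (sP _ yL)).
have nu : ~~ uniq (traject s d (size L).+1).
  apply/negP => u.
  have h : {subset traject s d (size L).+1 <= L} by move=> y /trajectP [k _ ->].
  by have := uniq_leq_size u h; rewrite size_traject ltnn.
case/(uniqPn d): nu => i [j [ij jn]].
rewrite size_traject in jn.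
rewrite !nth_traject // ?(ltn_trans ij) // => e.
exfalso; apply: (acyc (x:=iter i s d)); rewrite {2}e.
have -> : j = (j - i).-1.+1 + i.
  by rewrite prednK ?subnK ?subn_gt0 // ltnW.
by rewrite iterD; apply: ct.
Qed.
Definition goodfrom (P ord : seq A) := forall pre x suf, ord = pre ++ x :: suf ->
  forall a, a \in rhs x -> a \in Pi -> a \in P ++ pre.

Lemma topo n : forall P L, size L = n -> uniq (P ++ L) ->
  (forall a, (a \in Pi) = (a \in P ++ L)) -> exists ord, perm_eq ord L /\ goodfrom P ord.
Proof.
elim: n => [|n IH] P L sL u mem.
  exists [::]; split; first by rewrite (size0nil sL).
  by move=> [|??] ?? .
have [x xL xs] : exists2 x, x \in L & forall a, a \in rhs x -> a \notin L.
  apply: sink; first by apply/eqP => e; rewrite e in sL.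
  by move=> y yL; rewrite mem mem_cat yL orbT.
have pL := perm_to_rem xL.
have [ord [po go]] : exists ord, perm_eq ord (rem x L) /\ goodfrom (P ++ [:: x]) ord.
  apply: IH.
  - by have := perm_size pL; rewrite sL /= => -[].
  - by rewrite -catA /=; rewrite (perm_uniq (perm_cat (perm_refl P) pL)) in u.
  - by move=> a; rewrite mem -catA /= (perm_mem (perm_cat (perm_refl P) pL)).
exists (x :: ord); split; first by rewrite (permPr pL) perm_cons.
move=> [|z pre] y suf /= [<-].
  move=> _ a ar aPi; rewrite cats0; move: aPi; rewrite mem mem_cat.
  by rewrite (negbTE (xs a ar)) orbF.
move=> e a ar aPi; have := go _ _ _ e a ar aPi.
by rewrite -catA.
Qed.
End S.

Theorem theorem7 (A : eqType) (Sigma Sigmahat : A -> Prop) (Pi : seq A)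
  (R : seq A * seq A -> Prop) (rhs : A -> seq A) :
  (forall a, Sigma a -> Sigmahat a) ->
  uniq Pi ->
  (forall a, a \in Pi <-> (Sigmahat a /\ ~ Sigma a)) ->
  (forall q r, R (q, r) -> word_over Sigma q /\ word_over Sigma r) ->
  defining_family Sigmahat Pi rhs ->
  acyclic (dgg_edge Pi rhs) ->
  GenPlus_seq (size Pi) (Pres Sigma R)
    (Pres Sigmahat (fun r => R r \/ family_rels Pi rhs r)).
Proof.
move=> SS uPi Pidef _ dfam acyc.
have [ord [po go]] := topo acyc (erefl (size Pi)) (P:=[::]) uPi (fun a => erefl).
have uo : uniq ord by rewrite (perm_uniq po).
have mo := perm_mem po.
exists (fun i => Pres (fun a => Sigma a \/ a \in take i ord)
   (fun r => R r \/ exists2 x, x \in take i ord & r = ([:: x], rhs x))).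
split; [|split].
- rewrite take0; f_equal; apply: functional_extensionality => a;
  apply: propositional_extensionality; split; (try by left); by case => // -[].
- rewrite -(perm_size po) take_size; f_equal; apply: functional_extensionality => a;
  apply: propositional_extensionality.
  + split; first by case => [/SS //|]; rewrite mo => /Pidef [].
    move=> h; case: (classic (Sigma a)) => hs; [by left|right].
    by rewrite mo; apply/Pidef.
  + by split; case => h; [left|right; case: h => x; rewrite mo => *; exists x|left|right; case: h => x; rewrite -mo => *; exists x].
- move=> i; rewrite -(perm_size po) => ilt.
  case E: (drop i ord) => [|x suf].
    by move: (size_drop i ord); rewrite E /= => /esym/eqP; rewrite subn_eq0 leqNgt ilt.
  have dec : ord = take i ord ++ x :: suf by rewrite -E cat_take_drop.
  have nx : nth x ord i = x by rewrite -[i]addn0 -nth_drop E.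
  have tk : take i.+1 ord = take i ord ++ [:: x] by rewrite (take_nth x ilt) nx cats1.
  have xo : x \in ord by rewrite dec mem_cat inE eqxx orbT.
  have xPi : x \in Pi by rewrite -mo.
  exists x, (rhs x); split; [|split; [|split]] => /=.
  + case; first by move: xPi => /Pidef [].
    move=> xt; move: uo; rewrite dec cat_uniq => /and3P [_ /hasPn h _].
    by have := h x; rewrite inE eqxx xt => /(_ isT).
  + move=> a ar; case: (classic (Sigma a)) => hs; [by left|right].
    apply: (go (take i ord) x suf dec a ar); apply/Pidef; split => //.
    exact: dfam xPi a ar.
  + apply: functional_extensionality => a; apply: propositional_extensionality.
    rewrite tk mem_cat inE; split.
      by case => [h|/orP [h|/eqP h]]; [left; left|left; right|right].
    by case => [[h|h]|h]; [left|right; rewrite h|right; rewrite h eqxx orbT].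
  + apply: functional_extensionality => r; apply: propositional_extensionality.
    rewrite tk; split.
      case => [h|[y]]; first by left; left.
      rewrite mem_cat inE => /orP [h ->|/eqP -> ->]; [by left; right; exists y|by right].
    case => [[h|[y yt ->]]|->]; first by left.
      by right; exists y => //; rewrite mem_cat yt.
    by right; exists x => //; rewrite mem_cat inE eqxx orbT.
Qed.
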